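(* Let $1\le p\le q$. If $(p,q)$ does not satisfy $q=p\ge3$, then $\mathfrak{D}(K_{p,q})$ is unique: for every graph $G$ with no isolated vertices, $\mathfrak{D}(G)\cong\mathfrak{D}(K_{p,q})$ implies $G\cong K_{p,q}$. If $p=q\ge3$ and $G$ is a graph with no isolated vertices with $\mathfrak{D}(G)\cong\mathfrak{D}(K_{p,p})$, then $G\cong K_{p,p}$ or $G\cong K_p\,\Box\,K_2$ (and indeed $\mathfrak{D}(K_p\Box K_2)\cong\mathfrak{D}(K_{p,p})$).
   Context: All graphs are finite, simple, undirected. A set $S\subseteq V(G)$ is a dominating set if every vertex of $G$ is in $S$ or adjacent to a vertex of $S$. The domination TAR graph $\mathfrak{D}(G)$ has as vertices the dominating sets of $G$, with $S_1S_2$ an edge iff $|S_1\ominus S_2|=1$ (symmetric difference). $K_{p,q}$ is the complete bipartite graph with parts of sizes $p$ and $q$; $\Box$ is the Cartesian product. *)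

(* Defs.v *)
From mathcomp Require Import all_boot.
Set Implicit Arguments. Unset Strict Implicit. Unset Printing Implicit Defensive.

Definition simple_graph (T : finType) (e : rel T) : Prop :=
  symmetric e /\ irreflexive e.

Definition no_isolated (T : finType) (e : rel T) : Prop :=
  forall x : T, exists y : T, e x y.

Definition graph_iso (V1 V2 : finType) (r1 : rel V1) (r2 : rel V2) : Prop :=
  exists f : V1 -> V2, bijective f /\ forall x y, r2 (f x) (f y) = r1 x y.

Definition dominating (T : finType) (e : rel T) (S : {set T}) : bool :=
  [forall x, (x \in S) || [exists y in S, e x y]].

Definition domset (T : finType) (e : rel T) : finType :=
  {S : {set T} | dominating e S}.

Definition symdiff (T : finType) (A B : {set T}) : {set T} :=
  (A :\: B) :|: (B :\: A).

Definition tar_rel (T : finType) (e : rel T) : rel (domset e) :=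
  fun S1 S2 => #|symdiff (val S1) (val S2)| == 1.

Definition Kpq_rel (p q : nat) : rel ('I_p + 'I_q)%type :=
  fun x y => match x, y with
             | inl _, inr _ | inr _, inl _ => true
             | _, _ => false
             end.

Definition KpK2_rel (p : nat) : rel ('I_p * bool)%type :=
  fun x y => ((x.1 == y.1) && (x.2 != y.2)) || ((x.1 != y.1) && (x.2 == y.2)).

Arguments tar_rel {T} e.
Arguments graph_iso {V1 V2} r1 r2.
Arguments dominating {T} e S.
Arguments simple_graph {T} e.
Arguments no_isolated {T} e.
Arguments Kpq_rel p q : clear implicits.
Arguments KpK2_rel p : clear implicits.

(* Main.v *)
Require Import Defs.
From mathcomp Require Import all_boot.
Set Implicit Arguments. Unset Strict Implicit. Unset Printing Implicit Defensive.


Lemma in_symdiff (T : finType) (A B : {set T}) x :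
  (x \in symdiff A B) = (x \in A) (+) (x \in B).
Proof. by rewrite /symdiff !inE; case: (x \in A); case: (x \in B). Qed.

Definition Nb (T : finType) (e : rel T) (x : T) : {set T} :=
  [set y | (y == x) || e x y].

Lemma domP (T : finType) (e : rel T) (A : {set T}) :
  reflect (forall x, exists2 y, y \in A & y \in Nb e x) (dominating e A).
Proof.
apply: (iffP forallP) => H x.
  case/orP: (H x) => [xA|/existsP[y /andP[yA exy]]].
    by exists x; rewrite // inE eqxx.
  by exists y; rewrite // inE exy orbT.
case: (H x) => y yA; rewrite inE => /orP[/eqP<-|exy]; first by rewrite yA.
by apply/orP; right; apply/existsP; exists y; rewrite yA.
Qed.

Lemma nondomP (T : finType) (e : rel T) (A : {set T}) :
  ~~ dominating e A -> exists v, forall y, y \in Nb e v -> y \notin A.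
Proof.
rewrite /dominating negb_forall => /existsP[v]; rewrite negb_or negb_exists.
move=> /andP[vA /forallP H]; exists v => y; rewrite inE => /orP[/eqP->//|evy].
by apply/negP=> yA; move: (H y); rewrite yA evy.
Qed.

Lemma notdom (T : finType) (e : rel T) (A : {set T}) v :
  (forall y, y \in Nb e v -> y \notin A) -> ~~ dominating e A.
Proof.
by move=> H; apply/domP => D; case: (D v) => y yA /H; rewrite yA.
Qed.

Lemma nbhd_sub (U : finType) (e1 e2 : rel U) :
  (forall A, dominating e1 A = dominating e2 A) ->
  forall x, exists v, Nb e1 v \subset Nb e2 x.
Proof.
move=> H x.
have: ~~ dominating e2 (~: Nb e2 x).
  by apply: (@notdom _ _ _ x) => y yN; rewrite inE yN.
rewrite -H => /nondomP[v Hv]; exists v; apply/subsetP => y /Hv.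
by rewrite inE; case: (y \in Nb e2 x).
Qed.

Lemma dom_super (T : finType) (e : rel T) (A B : {set T}) :
  A \subset B -> dominating e A -> dominating e B.
Proof.
move=> sAB /domP H; apply/domP => x; case: (H x) => y yA yN; exists y => //.
exact: (subsetP sAB).
Qed.

Lemma dom_setTD (T : finType) (e : rel T) v :
  simple_graph e -> no_isolated e -> dominating e (setT :\ v).
Proof.
move=> [_ irr] noiso; apply/domP => x; case: (eqVneq x v) => [->|xv].
  case: (noiso v) => y evy; exists y; last by rewrite inE evy orbT.
  rewrite !inE andbT; apply/eqP=> yv; by rewrite yv irr in evy.
by exists x; rewrite !inE ?xv ?eqxx.
Qed.

Lemma symdiffC (T : finType) (A B : {set T}) : symdiff A B = symdiff B A.
Proof. by apply/setP=> x; rewrite !in_symdiff addbC. Qed.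

Lemma symdiff_U1 (T : finType) (X : {set T}) v :
  v \notin X -> symdiff X (v |: X) = [set v].
Proof.
move=> vX; apply/setP=> x; rewrite in_symdiff !inE.
by case: (eqVneq x v) => [->|]; rewrite ?(negbTE vX) //= addbb.
Qed.

Lemma square (U : finType) (A B C D : {set U}) i j k l :
  symdiff A B = [set i] -> symdiff B C = [set j] -> symdiff C D = [set k] ->
  symdiff D A = [set l] -> A != C -> B != D -> i = k.
Proof.
move=> hAB hBC hCD hDA nAC nBD.
have m (X Y : {set U}) a x : symdiff X Y = [set a] -> (x \in Y) = (x \in X) (+) (x == a).
  by move=> h; have := congr1 (fun Z : {set U} => x \in Z) h; rewrite /= in_symdiff in_set1 => <-;
     case: (x \in X); case: (x \in Y).
have ij : i != j.
  apply: contra nAC => /eqP ij; apply/eqP/setP => x.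
  by rewrite (m _ _ _ _ hBC) (m _ _ _ _ hAB) ij -addbA addbb addbF.
have il : i != l.
  apply: contra nBD => /eqP il; apply/eqP/setP => x.
  have hAD : symdiff A D = [set l] by rewrite symdiffC.
  by rewrite (m _ _ _ _ hAD) (m _ _ _ _ hAB) il.
have e1 := m _ _ _ i hAB; have e2 := m _ _ _ i hBC; have e3 := m _ _ _ i hCD;
have e4 := m _ _ _ i hDA.
rewrite eqxx in e1; rewrite (negbTE ij) in e2; rewrite (negbTE il) in e4.
case: (eqVneq i k) => // ik; exfalso; rewrite (negbTE ik) in e3.
move: e1 e2 e3 e4; case: (i \in A); case: (i \in B); case: (i \in C);
  case: (i \in D) => //=.
Qed.

Lemma symdiff_mem (T : finType) (A B C : {set T}) x :
  symdiff A B = C -> (x \in B) = (x \in A) (+) (x \in C).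
Proof.
move=> <-; rewrite in_symdiff; by case: (x \in A); case: (x \in B).
Qed.

Lemma inNb (T : finType) (e : rel T) x y : (y \in Nb e x) = (y == x) || e x y.
Proof. by rewrite inE. Qed.


Lemma core (T U : finType) (e : rel T) (r : rel U) :
  simple_graph e -> no_isolated e -> simple_graph r -> no_isolated r ->
  graph_iso (tar_rel e) (tar_rel r) ->
  exists sigma : T -> U, bijective sigma /\
    forall S, dominating e S = dominating r (sigma @: S).
Proof.
move=> se ne sr nr [phi [[psi phiK psiK] Hphi]].
pose F (S : {set T}) : {set U} :=
  odflt set0 (omap (fun X => val (phi X)) (@insub _ (dominating e) (domset e) S)).
have FE S (h : dominating e S) : F S = val (phi (exist _ S h)).
  by rewrite /F insubT.
have Fdom S : dominating e S -> dominating r (F S).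
  by move=> h; rewrite (FE S h); exact: valP.
have Finj S S' : dominating e S -> dominating e S' -> F S = F S' -> S = S'.
  move=> h h'; rewrite (FE S h) (FE S' h') => /val_inj /(can_inj phiK) E.
  by have := congr1 val E.
have Fsurj Y : dominating r Y -> exists2 S, dominating e S & F S = Y.
  move=> h; set X := psi (exist _ Y h); exists (val X); first exact: valP.
  rewrite (FE _ (valP X)); have -> : exist _ (val X) (valP X) = X by apply: val_inj.
  by rewrite /X psiK.
have Fedge S S' : dominating e S -> dominating e S' -> #|symdiff S S'| == 1 ->
    exists i, symdiff (F S) (F S') = [set i].
  move=> h h' E; apply/cards1P; rewrite (FE S h) (FE S' h').
  by have := Hphi (exist _ S h) (exist _ S' h'); rewrite /tar_rel /= => ->.
have domT : dominating e setT.
  by apply/domP => x; exists x; [exact: in_setT | rewrite inE eqxx].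
have domT_r : dominating r setT.
  by apply/domP => x; exists x; [exact: in_setT | rewrite inE eqxx].
clearbody F; clear FE Hphi phiK psiK phi psi.
have domTD v : dominating e (setT :\ v) by exact: dom_setTD.
have ex_s v : exists i, symdiff (F setT) (F (setT :\ v)) == [set i].
  have E1 : #|symdiff setT (setT :\ v)| == 1.
    have -> : symdiff setT (setT :\ v) = [set v].
      by apply/setP=> x; rewrite in_symdiff !inE; case: (x == v).
    by rewrite cards1.
  have [i Hi] := Fedge _ _ domT (domTD v) E1.
  by exists i; rewrite Hi.
pose sigma v := xchoose (ex_s v).
have sigE v : symdiff (F setT) (F (setT :\ v)) = [set sigma v].
  exact: eqP (xchooseP (ex_s v)).
have coord v : forall X, dominating e X -> v \notin X ->
    symdiff (F X) (F (v |: X)) = [set sigma v].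
  suff H : forall n X, #|~: X| <= n -> dominating e X -> v \notin X ->
    symdiff (F X) (F (v |: X)) = [set sigma v] by move=> X; exact: H.
  elim=> [|n IH] X.
    move=> h _ vX; have : 0 < #|~: X| by apply/card_gt0P; exists v; rewrite inE.
    by move: h; rewrite leqn0 => /eqP ->.
  move=> hn dX vX.
  case: (boolP (v |: X == setT)) => [/eqP vXT | vXT].
    have -> : X = setT :\ v.
      apply/setP=> x; have := congr1 (fun Z : {set T} => x \in Z) vXT.
      rewrite /= !inE; case: (eqVneq x v) => [->|//]; by rewrite (negbTE vX).
    by rewrite setD1K ?in_setT // symdiffC.
  have [w Hw] : exists w, w \notin v |: X.
    apply/existsP; rewrite -negb_forall; apply: contra vXT => /forallP Hall.
    by apply/eqP/setP=> x; rewrite in_setT Hall.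
  have wv : w != v by apply: contra Hw => /eqP->; rewrite setU11.
  have wX : w \notin X by apply: contra Hw => wX; rewrite inE wX orbT.
  have vwX : v \notin w |: X by rewrite !inE negb_or eq_sym wv.
  have dwX : dominating e (w |: X) by apply: dom_super dX; exact: subsetUr.
  have hn' : #|~: (w |: X)| <= n.
    have : #|~: X| = 1 + #|~: (w |: X)|.
      rewrite (cardsD1 w) inE wX; congr (_ + _); apply: eq_card => x.
      by rewrite !inE negb_or.
    by move=> E; rewrite E add1n ltnS in hn.
  have IHw := IH _ hn' dwX vwX.
  have dvX : dominating e (v |: X) by apply: dom_super dX; exact: subsetUr.
  have dvwX : dominating e (v |: (w |: X)) by apply: dom_super dX;
    rewrite setUA; exact: subsetUr.
  have ci : #|symdiff X (v |: X)| == 1 by rewrite symdiff_U1 // cards1.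
  have [i hAB] := Fedge _ _ dX dvX ci.
  have cj : #|symdiff (v |: X) (v |: (w |: X))| == 1 by rewrite setUCA symdiff_U1 // cards1.
  have [j hBC] := Fedge _ _ dvX dvwX cj.
  have ck : #|symdiff (v |: (w |: X)) (w |: X)| == 1 by rewrite symdiffC symdiff_U1 // cards1.
  have [k hCD] := Fedge _ _ dvwX dwX ck.
  have cl : #|symdiff (w |: X) X| == 1 by rewrite symdiffC symdiff_U1 // cards1.
  have [l hDA] := Fedge _ _ dwX dX cl.
  have ki : k = sigma v by apply: set1_inj; rewrite -hCD symdiffC.
  rewrite hAB (square hAB hBC hCD hDA) ?ki //.
    apply/negP=> /eqP /Finj E; have := E dX dvwX.
    by move=> XE; move: vX; rewrite XE !inE eqxx.
  apply/negP=> /eqP /Finj E; have := E dvX dwX.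
  by move=> XE; move: vwX; rewrite -XE !inE eqxx.
clearbody sigma.
have [esym eirr] := se.
have sinj : injective sigma.
  move=> v w E.
  have hv : F (setT :\ v) = symdiff (F setT) [set sigma v].
    by apply/setP=> x; rewrite (symdiff_mem x (sigE v)) in_symdiff.
  have hw : F (setT :\ w) = symdiff (F setT) [set sigma w].
    by apply/setP=> x; rewrite (symdiff_mem x (sigE w)) in_symdiff.
  rewrite E -hw in hv.
  have := Finj _ _ (domTD v) (domTD w) hv.
  move=> /(congr1 (fun Z : {set T} => v \in Z)); rewrite /= !inE eqxx /=.
  by case: (eqVneq v w).
have form : forall S, dominating e S -> F S = symdiff (F setT) (sigma @: ~: S).
  suff H : forall n S, #|~: S| <= n -> dominating e S ->
      F S = symdiff (F setT) (sigma @: ~: S) by move=> S; exact: H.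
  have baseT : F setT = symdiff (F setT) (sigma @: ~: setT).
    by rewrite setCT imset0; apply/setP=> x; rewrite in_symdiff inE addbF.
  elim=> [|n IH] S.
    move=> h dS; have S0 : ~: S = set0 by apply: cards0_eq; move: h; rewrite leqn0 => /eqP.
    by have -> : S = setT by rewrite -[S]setCK S0 setC0.
  move=> hn dS; case: (boolP (S == setT)) => [/eqP-> // | ST].
  have [v vS] : exists v, v \notin S.
    apply/existsP; rewrite -negb_forall; apply: contra ST => /forallP Hall.
    by apply/eqP/setP=> x; rewrite in_setT Hall.
  have dvS : dominating e (v |: S) by apply: dom_super dS; exact: subsetUr.
  have hn' : #|~: (v |: S)| <= n.
    have : #|~: S| = 1 + #|~: (v |: S)|.
      rewrite (cardsD1 v) inE vS; congr (_ + _); apply: eq_card => x.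
      by rewrite !inE negb_or.
    by move=> E; rewrite E add1n ltnS in hn.
  have IHv := IH _ hn' dvS.
  have co := coord v S dS vS; rewrite symdiffC in co.
  have eC : ~: S = v |: ~: (v |: S).
    by apply/setP=> x; rewrite !inE; case: (eqVneq x v) => [->|]; rewrite ?vS.
  have nsv : sigma v \notin sigma @: ~: (v |: S) by rewrite mem_imset // in_setC setU11.
  apply/setP=> x; rewrite (symdiff_mem x co) IHv !in_symdiff eC imsetU1 in_setU1 in_set1.
  case: (eqVneq x (sigma v)) => [->|_]; last by rewrite /= addbF.
  by rewrite (negbTE nsv) addbF.
have memT y S : dominating e S ->
    (sigma y \in F S) = (sigma y \in F setT) (+) ~~ (y \in S).
  by move=> dS; rewrite (form S dS) in_symdiff mem_imset // inE.
have memN x S : dominating e S -> (forall y, sigma y != x) ->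
    (x \in F S) = (x \in F setT).
  move=> dS nx; rewrite (form S dS) in_symdiff; case: imsetP => [[y _ E]|_].
    by move: (nx y); rewrite -E eqxx.
  by rewrite addbF.
have c1 a : sigma a \in F setT.
  apply/negPn/negP => na.
  set S := [set y | ~~ e a y].
  have aS : a \in S by rewrite inE eirr.
  have dS : dominating e S.
    apply/domP => x; case: (boolP (e a x)) => eax.
      by exists a; rewrite // inE esym eax orbT.
    by exists x; rewrite !inE ?eax ?eqxx.
  have dY : dominating r (sigma a |: F S) by apply: dom_super (Fdom _ dS); exact: subsetUr.
  have [S' dS' ES'] := Fsurj _ dY.
  have aS' : a \notin S'.
    by have := memT a S' dS'; rewrite ES' setU11 (negbTE na) /= => <-.
  have S'S y : y != a -> (y \in S') = (y \in S).
    move=> ya; have := memT y S' dS'; rewrite ES' in_setU1 (inj_eq sinj) (negbTE ya) /=.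
    rewrite (memT y S dS).
    by case: (sigma y \in F setT); case: (y \in S); case: (y \in S').
  suff : ~~ dominating e S' by rewrite dS'.
  apply: (@notdom _ _ _ a) => y; rewrite inE => /orP[/eqP->//|eay].
  have ya : y != a by apply: contraTneq eay => ->; rewrite eirr.
  by rewrite S'S // inE eay.
have c2 x : (forall y, sigma y != x) -> x \notin F setT.
  move=> nx; apply/negP => xT.
  have [S' dS' ES'] := Fsurj _ (dom_setTD x sr nr).
  by have := memN x S' dS' nx; rewrite ES' xT !inE eqxx.
have FS S : dominating e S -> F S = sigma @: S.
  move=> dS; apply/setP=> x.
  case: (pickP (fun y => sigma y == x)) => [y /eqP <- | nx].
    by rewrite (memT y S dS) c1 mem_imset //; case: (y \in S).
  have nx' : forall y, sigma y != x by move=> y; rewrite nx.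
  rewrite (memN x S dS nx') (negbTE (c2 x nx')).
  by case: imsetP => // [[y _ E]]; move: (nx' y); rewrite E eqxx.
exists sigma; split.
  have [S' dS' ES'] := Fsurj _ domT_r.
  apply: (inj_card_bij sinj).
  by rewrite -cardsT -ES' (FS _ dS') card_imset //; exact: max_card.
move=> S; apply/idP/idP => [dS | dY]; first by rewrite -FS //; exact: Fdom.
have [S' dS' E] := Fsurj _ dY; rewrite (FS _ dS') in E.
by rewrite -(imset_inj sinj E).
Qed.


Lemma dom_transfer (T U : finType) (e : rel T) (r : rel U) (g : T -> U) (h : T -> T) :
  bijective g -> bijective h ->
  (forall x y, (g y == g x) || r (g x) (g y) = (y == h x) || e (h x) y) ->
  forall S : {set T}, dominating r (g @: S) = dominating e S.
Proof.
move=> [gi gK giK] [hi hK hiK] H S; apply/domP/domP => D x.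
  case: (D (g (hi x))) => z /imsetP[y yS ->]; rewrite inE H hiK => yN.
  by exists y; rewrite // inE.
case: (D (h (gi x))) => y yS; rewrite inE -H giK => yN.
by exists (g y); [exact: imset_f | rewrite inE].
Qed.

Lemma iso_trans (V1 V2 V3 : finType) (r1 : rel V1) (r2 : rel V2) (r3 : rel V3) :
  graph_iso r1 r2 -> graph_iso r2 r3 -> graph_iso r1 r3.
Proof.
move=> [f [bf Hf]] [g [bg Hg]]; exists (g \o f); split; first exact: bij_comp.
by move=> x y; rewrite /= Hg Hf.
Qed.

Lemma iso_sym (V1 V2 : finType) (r1 : rel V1) (r2 : rel V2) :
  graph_iso r1 r2 -> graph_iso r2 r1.
Proof.
move=> [f [[fi fK fiK] Hf]]; exists fi; split; first by exists f.
by move=> x y; rewrite -Hf !fiK.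
Qed.

Lemma iso_eq (V : finType) (r1 r2 : rel V) :
  (forall x y, r2 x y = r1 x y) -> graph_iso r1 r2.
Proof. by move=> H; exists id; split; [exists id | ]. Qed.

Lemma imsetK (T U : finType) (g : T -> U) gi (A : {set U}) :
  cancel gi g -> g @: (gi @: A) = A.
Proof. by move=> K; rewrite -imset_comp (eq_imset _ K) imset_id. Qed.

Lemma tar_of_dom (T U : finType) (e : rel T) (r : rel U) (g : T -> U) :
  bijective g -> (forall S : {set T}, dominating r (g @: S) = dominating e S) ->
  graph_iso (tar_rel e) (tar_rel r).
Proof.
move=> bg H; have [gi gK giK] := bg.
have K1 (X : domset e) : dominating r (g @: val X) by rewrite H; exact: valP.
have K2 (Y : domset r) : dominating e (gi @: val Y).
  by rewrite -H imsetK //; exact: valP.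
pose phi (X : domset e) : domset r := Sub (g @: val X) (K1 X).
pose psi (Y : domset r) : domset e := Sub (gi @: val Y) (K2 Y).
exists phi; split.
  exists psi => X; apply: val_inj; rewrite /= imsetK //.
have sd (A B : {set T}) : symdiff (g @: A) (g @: B) = g @: symdiff A B.
  apply/setP=> z; rewrite -[z]giK in_symdiff !mem_imset ?in_symdiff //; exact: bij_inj.
move=> X Y; rewrite /tar_rel /= sd card_imset //; exact: bij_inj.
Qed.


Lemma K_simple p q : simple_graph (Kpq_rel p q).
Proof. by split; [case=> x [] y | case]. Qed.

Lemma K_noiso p q : 0 < p -> 0 < q -> no_isolated (Kpq_rel p q).
Proof.
move=> p0 q0 [x|y]; first by exists (inr (Ordinal q0)).
by exists (inl (Ordinal p0)).
Qed.

Lemma classify1 q (e : rel ('I_1 + 'I_q)) :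
  simple_graph e -> no_isolated e ->
  (forall A, dominating e A = dominating (Kpq_rel 1 q) A) ->
  forall x y, e x y = Kpq_rel 1 q x y.
Proof.
move=> [esym eirr] noiso H.
set c : 'I_1 + 'I_q := inl ord0.
have cE i : inl i = c by rewrite /c (ord1 i).
have helper j : Nb e (inr j) \subset Nb (Kpq_rel 1 q) (inr j) \/
                Nb e c \subset Nb (Kpq_rel 1 q) (inr j).
  have [v Hv] := nbhd_sub H (inr j).
  have : v \in Nb (Kpq_rel 1 q) (inr j) by apply: (subsetP Hv); rewrite inNb eqxx.
  rewrite inNb /=; case: v Hv => [i|j'] Hv; first by rewrite cE in Hv; right.
  by rewrite orbF => /eqP [E]; left; rewrite E in Hv.
have rr j j' : e (inr j) (inr j') = false.
  apply/negP => ejj.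
  have jj : j != j' by apply: contraTneq ejj => ->; rewrite eirr.
  have first k k' : k != k' -> e (inr k) (inr k') ->
      ~ Nb e (inr k) \subset Nb (Kpq_rel 1 q) (inr k).
    move=> kk ekk /subsetP S; have := S (inr k'); rewrite !inNb ekk orbT /= orbF.
    by move=> /(_ isT) /eqP [E]; move: kk; rewrite E eqxx.
  case: (helper j) => [S|Sj]; first exact: (first _ _ jj ejj S).
  case: (helper j') => [S|Sj']; first by apply: (first j' j _ _ S); [rewrite eq_sym | rewrite esym].
  case: (noiso c) => y ecy.
  have yN : y \in Nb e c by rewrite inNb ecy orbT.
  have := subsetP Sj _ yN; have := subsetP Sj' _ yN; rewrite !inNb /=.
  case: y ecy yN => [i|k] ecy yN.
    by rewrite cE eirr in ecy.
  rewrite !orbF => /eqP [E1] /eqP [E2]; move: jj; by rewrite -E1 -E2 eqxx.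
have rc j : e (inr j) c.
  case: (noiso (inr j)) => [[i|k] ejy]; first by rewrite -(cE i).
  by rewrite rr in ejy.
case=> [i|j] [i'|j'] /=.
- by rewrite cE (cE i') eirr.
- by rewrite cE esym rc.
- by rewrite cE rc.
- exact: rr.
Qed.

Lemma other n (h : 1 < n) (j : 'I_n) : exists j' : 'I_n, j' != j.
Proof.
have h0 : 0 < n by apply: ltnW.
case: (eqVneq (nat_of_ord j) 0) => [j0|j0].
  by exists (Ordinal h); apply/eqP => /(congr1 val) /=; rewrite j0.
by exists (Ordinal h0); apply/eqP => /(congr1 val) /= E; move: j0; rewrite -E.
Qed.

Lemma NK_sub p q (hp : 1 < p) (hq : 1 < q) (x y : 'I_p + 'I_q) :
  Nb (Kpq_rel p q) y \subset Nb (Kpq_rel p q) x -> y = x.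
Proof.
move=> /subsetP S.
case: x S => [i|j] S; case: y S => [i'|j'] S.
- by have := S (inl i'); rewrite !inNb eqxx /= orbF => /(_ isT) /eqP ->.
- have [i2 ne] := other hp i; have := S (inl i2); rewrite !inNb /= orbF.
  by move=> /(_ isT) /eqP [E]; rewrite E eqxx in ne.
- have [j2 ne] := other hq j; have := S (inr j2); rewrite !inNb /= orbF.
  by move=> /(_ isT) /eqP [E]; rewrite E eqxx in ne.
- by have := S (inr j'); rewrite !inNb eqxx /= orbF => /(_ isT) /eqP ->.
Qed.


Lemma inlE p q (a b : 'I_p) : (inl a == inl b :> 'I_p + 'I_q) = (a == b).
Proof. by apply/eqP/eqP => [[]|->]. Qed.

Lemma inrE p q (a b : 'I_q) : (inr a == inr b :> 'I_p + 'I_q) = (a == b).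
Proof. by apply/eqP/eqP => [[]|->]. Qed.

Lemma classify2 p q (e : rel ('I_p + 'I_q)) : 1 < p -> 1 < q ->
  simple_graph e ->
  (forall A, dominating e A = dominating (Kpq_rel p q) A) ->
  (forall x y, e x y = Kpq_rel p q x y) \/ (p = q /\ graph_iso e (KpK2_rel p)).
Proof.
move=> hp hq [esy eirr] H.
have Kirr : irreflexive (Kpq_rel p q) by case.
have exN x : exists v, Nb e v == Nb (Kpq_rel p q) x.
  have [v Hv] := nbhd_sub H x.
  have [y Hy] := nbhd_sub (fun A => esym (H A)) v.
  have yx := NK_sub hp hq (subset_trans Hy Hv).
  by exists v; rewrite eqEsubset Hv -yx.
pose f x := xchoose (exN x).
have fE x : Nb e (f x) = Nb (Kpq_rel p q) x := eqP (xchooseP (exN x)).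
have finj : injective f.
  move=> x y E; have Exy : Nb (Kpq_rel p q) x = Nb (Kpq_rel p q) y by rewrite -fE E fE.
  by symmetry; apply: (NK_sub hp hq); rewrite Exy subxx.
have [t fK Kt] := injF_bij finj.
have Nt v : Nb e v = Nb (Kpq_rel p q) (t v) by rewrite -{1}(Kt v) fE.
have nbE v y : (y == v) || e v y = (y == t v) || Kpq_rel p q (t v) y.
  by have := congr1 (fun Z : {set _} => y \in Z) (Nt v); rewrite /= !inNb.
have tc v : t v = v \/ Kpq_rel p q (t v) v.
  have := nbE v v; rewrite eqxx /= => /esym /orP [/eqP E|]; [by left | by right].
case: (boolP [forall v, t v == v]) => [/forallP tid | ].
  left => x y; case: (eqVneq y x) => [->|yx]; first by rewrite eirr Kirr.
  by have := nbE x y; rewrite (eqP (tid x)) (negbTE yx) /=.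
rewrite negb_forall => /existsP [v0 tv0].
have bad u v : t v != v -> ~~ Kpq_rel p q u v -> t u != u.
  move=> tv Kuv; case: (eqVneq u v) => [->//|uv].
  have Ktv : Kpq_rel p q (t v) v by case: (tc v) => // E; rewrite E eqxx in tv.
  have Ktu : Kpq_rel p q (t v) u.
    by move: Ktv Kuv; case: (t v) => ?; case: u {uv} => ?; case: v {tv} => ?.
  have evu : e v u by have := nbE v u; rewrite Ktu orbT (negbTE uv) /=.
  apply/eqP => tu; have := nbE u v; rewrite tu esy evu orbT eq_sym (negbTE uv).
  by rewrite (negbTE Kuv).
have i0 : 'I_p := Ordinal (ltnW hp).
have j0 : 'I_q := Ordinal (ltnW hq).
have crossL : (forall i, t (inl i) != inl i) -> forall j, t (inr j) != inr j.
  move=> hL j; have tf := fK (inl i0).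
  case E: (f (inl i0)) tf => [i|j'] tf.
    exfalso; case: (tc (inl i)) => [E'|].
      by move: (hL i); rewrite E' eqxx.
    by rewrite tf.
  by apply: (bad _ (inr j')); rewrite // tf.
have crossR : (forall j, t (inr j) != inr j) -> forall i, t (inl i) != inl i.
  move=> hR i; have tf := fK (inr j0).
  case E: (f (inr j0)) tf => [i'|j] tf.
    by apply: (bad _ (inl i')); rewrite // tf.
  exfalso; case: (tc (inr j)) => [E'|].
    by move: (hR j); rewrite E' eqxx.
  by rewrite tf.
have allbad : forall v, t v != v.
  case: v0 tv0 => [a|a] tv0.
    have hL : forall i, t (inl i) != inl i by move=> i; exact: (bad _ _ tv0).
    by case=> [i|j]; [exact: hL | exact: crossL hL j].
  have hR : forall j, t (inr j) != inr j by move=> j; exact: (bad _ _ tv0).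
  by case=> [i|j]; [exact: crossR hR i | exact: hR].
have tK v : Kpq_rel p q (t v) v.
  by case: (tc v) => // E; have := allbad v; rewrite E eqxx.
have exL i : exists j, t (inl i) == inr j.
  by move: (tK (inl i)); case: (t (inl i)) => // j _; exists j.
have exR j : exists i, t (inr j) == inl i.
  by move: (tK (inr j)); case: (t (inr j)) => // i _; exists i.
pose hL i := xchoose (exL i).
have hLE i : t (inl i) = inr (hL i) := eqP (xchooseP (exL i)).
pose hR j := xchoose (exR j).
have hRE j : t (inr j) = inl (hR j) := eqP (xchooseP (exR j)).
have tinj : injective t := can_inj Kt.
have hLinj : injective hL.
  move=> a b E; have : t (inl a) = t (inl b) by rewrite !hLE E.
  by move/tinj => [].
have hRinj : injective hR.
  move=> a b E; have : t (inr a) = t (inr b) by rewrite !hRE E.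
  by move/tinj => [].
have pq : p = q.
  apply/eqP; rewrite eqn_leq.
  by have := leq_card hL hLinj; have := leq_card hR hRinj; rewrite !card_ord => -> ->.
right; split => //.
pose phi (x : 'I_p + 'I_q) : 'I_p * bool :=
  match x with inl i => (i, true) | inr j => (hR j, false) end.
exists phi; split.
  apply: inj_card_bij.
    case=> [a|a] [b|b] //= E.
    - by have /= -> := congr1 fst E.
    - by have /= /hRinj -> := congr1 fst E.
  by rewrite card_prod card_sum !card_ord card_bool -pq muln2 addnn.
case=> [a|a] [b|b]; rewrite /KpK2_rel /=.
- have E := nbE (inl a) (inl b); rewrite hLE /= in E.
  case: (eqVneq a b) => [<-|ab] /=; first by rewrite eirr.
  by rewrite inlE eq_sym (negbTE ab) /= in E; rewrite E.
- have E := nbE (inr b) (inl a); rewrite hRE /= inlE orbF in E.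
  by rewrite andbT andbF orbF esy E.
- have E := nbE (inr a) (inl b); rewrite hRE /= inlE orbF in E.
  by rewrite andbT andbF orbF E eq_sym.
- have E := nbE (inr a) (inr b); rewrite hRE /= in E.
  rewrite (inj_eq hRinj).
  case: (eqVneq a b) => [<-|ab] /=; first by rewrite eirr.
  by rewrite inrE eq_sym (negbTE ab) /= in E; rewrite E.
Qed.


Definition f22 (x : 'I_2 * bool) : 'I_2 + 'I_2 :=
  if x.2 == (nat_of_ord x.1 == 0) then inl x.1 else inr x.1.

Lemma f22_ok x y : Kpq_rel 2 2 (f22 x) (f22 y) = KpK2_rel 2 x y.
Proof.
by case: x => [[[|[|?]] ?] []]; case: y => [[[|[|?]] ?] []].
Qed.

Definition g22 (z : 'I_2 + 'I_2) : 'I_2 * bool :=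
  match z with inl i => (i, nat_of_ord i == 0) | inr i => (i, nat_of_ord i != 0) end.

Lemma f22_inj : injective f22.
Proof.
apply: (can_inj (g:=g22)) => [[i b]]; rewrite /f22 /=.
by case: b; case Hi: (nat_of_ord i) => [|k] /=; rewrite ?Hi.
Qed.

Lemma K22_iso : graph_iso (KpK2_rel 2) (Kpq_rel 2 2).
Proof.
exists f22; split; last exact: f22_ok.
apply: inj_card_bij f22_inj _.
by rewrite card_sum card_prod !card_ord card_bool.
Qed.

Lemma prism_tar p : graph_iso (tar_rel (KpK2_rel p)) (tar_rel (Kpq_rel p p)).
Proof.
pose g (x : 'I_p * bool) : 'I_p + 'I_p := if x.2 then inl x.1 else inr x.1.
pose gi (z : 'I_p + 'I_p) : 'I_p * bool :=
  match z with inl i => (i, true) | inr i => (i, false) end.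
pose h (x : 'I_p * bool) := (x.1, ~~ x.2).
have bg : bijective g.
  exists gi. by case=> i []. by case.
have bh : bijective h by exists h; case=> i [].
apply: (tar_of_dom bg); apply: (dom_transfer bg bh).
case=> i [] [j []]; rewrite /g /h /KpK2_rel /= ?inlE ?inrE ?xpair_eqE /=;
  rewrite ?andbT ?andbF ?orbF ?orbT //=; by rewrite eq_sym; case: (i == j).
Qed.


Lemma main p q (T : finType) (e : rel T) : 0 < p -> p <= q ->
  simple_graph e -> no_isolated e ->
  graph_iso (tar_rel e) (tar_rel (Kpq_rel p q)) ->
  graph_iso e (Kpq_rel p q) \/ (p = q /\ 1 < p /\ graph_iso e (KpK2_rel p)).
Proof.
move=> p1 pq se ne iso.
have q1 : 0 < q by apply: leq_trans pq.
have [sigma [bs Hs]] := core se ne (K_simple p q) (K_noiso p1 q1) iso.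
have [si sK siK] := bs.
pose e' (x y : 'I_p + 'I_q) := e (si x) (si y).
have iso1 : graph_iso e e' by exists sigma; split => // x y; rewrite /e' !sK.
have [esy eirr] := se.
have se' : simple_graph e' by split => [x y|x]; rewrite /e' ?eirr // esy.
have Hd : forall A, dominating e' A = dominating (Kpq_rel p q) A.
  move=> A.
  have bid : bijective (@id T) by exists id.
  have d1 := @dom_transfer _ _ e e' sigma id bs bid _ (si @: A).
  rewrite imsetK // in d1; rewrite d1; last first.
    by move=> x y; rewrite /e' !sK (inj_eq (bij_inj bs)).
  by rewrite Hs imsetK.
have ne' : no_isolated e'.
  move=> x; case: (ne (si x)) => y Hy; exists (sigma y); by rewrite /e' sK.
case: (ltnP 1 p) => hp.
  have hq : 1 < q by apply: leq_trans pq.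
  case: (classify2 hp hq se' Hd) => [Heq|[pq' H2]].
    left; apply: iso_trans iso1 _; apply: iso_eq => x y; by rewrite Heq.
  by right; split => //; split => //; apply: iso_trans iso1 H2.
have p1' : p = 1 by apply/eqP; rewrite eqn_leq hp p1.
subst p; left; apply: iso_trans iso1 _; apply: iso_eq => x y.
by rewrite (classify1 se' ne' Hd).
Qed.

Unset Implicit Arguments.

Theorem proposition3p3 (p q : nat) :
  1 <= p -> p <= q ->
  (~ (q = p /\ 3 <= p) ->
     forall (T : finType) (e : rel T), simple_graph e -> no_isolated e ->
       graph_iso (tar_rel e) (tar_rel (Kpq_rel p q)) ->
       graph_iso e (Kpq_rel p q))
  /\
  (q = p -> 3 <= p ->
     (forall (T : finType) (e : rel T), simple_graph e -> no_isolated e ->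
        graph_iso (tar_rel e) (tar_rel (Kpq_rel p p)) ->
        graph_iso e (Kpq_rel p p) \/ graph_iso e (KpK2_rel p))
     /\ graph_iso (tar_rel (KpK2_rel p)) (tar_rel (Kpq_rel p p))).
Proof.
move=> p1 pq; split.
  move=> nb T e se ne iso.
  case: (main p1 pq se ne iso) => // [[epq [hp H2]]].
  subst q.
  have hp2 : p = 2.
    apply/eqP; rewrite eqn_leq hp andbT leqNgt; apply/negP => h3.
    by apply: nb.
  subst p; exact: iso_trans H2 K22_iso.
move=> qp p3; subst q; split; last exact: prism_tar.
move=> T e se ne iso.
case: (main p1 (leqnn p) se ne iso) => [H|[_ [_ H]]]; [by left | by right].
Qed.
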